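(* For $n\ge 4$ let $G'_n$ be the directed graph with nodes $0,\dots,n-1$ and arcs: $i\to i+1$ for $0\le i\le n-5$; $(n-4)\to(n-3)$; $(n-4)\to(n-1)$; $(n-1)\to(n-2)$; $(n-2)\to(n-1)$; and $j\to 0$ for every $1\le j\le n-1$. Then $\lim_{n\to\infty}R(G'_n)=1$.
   Context: $d_G(x,y)$ is the shortest directed path length from $x$ to $y$ ($\infty$ if none). The distance-count matrix $C_G\in\mathbb{R}^{n\times n}$ has $(C_G)_{i,k}=|\{j: d_G(j,i)=k\}|$. For $\mathbf a\in\mathbb{R}^{\mathbb{N}}$ (with $a_0$ arbitrary) the linear centrality is $f^{\mathbf a}_G(i)=\sum_{k=0}^{n-1}(C_G)_{i,k}a_k$. A permutation $\pi$ of $\{0,\dots,n-1\}$ is representable by $G$ if there is $\mathbf a$ with $f^{\mathbf a}_G(\pi(0))>\dots>f^{\mathbf a}_G(\pi(n-1))$. $R(G)=|\{\pi\in S_n:\pi\text{ representable by }G\}|/n!$. *)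

(* Defs.v *)
From HB Require Import structures.
From mathcomp Require Import all_boot all_order all_algebra all_fingroup.
From mathcomp Require Import all_classical all_reals all_analysis.
Set Implicit Arguments. Unset Strict Implicit. Unset Printing Implicit Defensive.
Import Order.TTheory GRing.Theory Num.Theory.
Local Open Scope ring_scope.

(* A directed graph on nodes {0,...,n-1} is a relation e on 'I_n: e x y = arc x -> y. *)

Fixpoint walk (n : nat) (e : rel 'I_n) (k : nat) (x y : 'I_n) : bool :=
  match k with
  | 0 => x == y
  | k'.+1 => [exists z : 'I_n, e x z && walk e k' z y]
  end.

(* dist_is e x y k : d_G(x,y) = k, i.e. k is the length of a shortest directed
   walk (equivalently path) from x to y. d = infinity corresponds to no k. *)
Definition dist_is (n : nat) (e : rel 'I_n) (x y : 'I_n) (k : nat) : bool :=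
  walk e k x y && [forall m : 'I_k, ~~ walk e m x y].

Definition dcount (n : nat) (e : rel 'I_n) (i : 'I_n) (k : nat) : nat :=
  #|[set j : 'I_n | dist_is e j i k]|.

Definition lincent (R : realType) (n : nat) (e : rel 'I_n) (a : nat -> R)
  (i : 'I_n) : R :=
  \sum_(k < n) (dcount e i k)%:R * a k.

Definition representable (R : realType) (n : nat) (e : rel 'I_n)
  (pi : 'S_n) : Prop :=
  exists a : nat -> R,
    forall i j : 'I_n, (i < j)%N -> lincent e a (pi j) < lincent e a (pi i).

Definition Rratio (R : realType) (n : nat) (e : rel 'I_n) : R :=
  (#|[set pi : 'S_n | `[< representable R e pi >]]|)%:R / (n`!)%:R.

Definition Gp (n : nat) : rel 'I_n := fun i j =>
  [|| (((val i).+1 == val j) && (val i + 5 <= n))%N,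
      ((val i == n - 4) && (val j == n - 3))%N,
      ((val i == n - 4) && (val j == n - 1))%N,
      ((val i == n - 1) && (val j == n - 2))%N,
      ((val i == n - 2) && (val j == n - 1))%N
    | ((1 <= val i) && (val j == 0))%N].

(* Main.v *)
Require Import Defs.
From HB Require Import structures.
From mathcomp Require Import all_boot all_order all_algebra all_fingroup.
From mathcomp Require Import all_classical all_reals all_analysis.
From mathcomp Require Import zify ring lra.
Set Implicit Arguments. Unset Strict Implicit. Unset Printing Implicit Defensive.
Import Order.TTheory GRing.Theory Num.Theory numFieldNormedType.Exports.
Local Open Scope ring_scope.
Local Open Scope classical_set_scope.
Section Dist.
Local Open Scope nat_scope.
Definition D (n j x : nat) : nat :=
  if x <= n-4 then (if j <= x then x - j else x.+1)
  else if x == n-3 then (if j <= n-4 then n-3-j else if j == n-3 then 0 else n-2)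
  else if x == n-2 then (if j <= n-4 then n-2-j else if j == n-3 then n-1
        else if j == n-2 then 0 else 1)
  else (if j <= n-4 then n-3-j else if j == n-3 then n-2 else if j == n-2 then 1 else 0).

Definition nxt (n j x : nat) : nat :=
  if (j < n-4) && (j < x) then j.+1
  else if j == n-4 then (if x == n-3 then n-3 else if x <= n-4 then 0 else n-1)
  else if (j == n-2) && (x == n-1) then n-1
  else if (j == n-1) && (x == n-2) then n-2
  else 0.

Lemma D_edge n j z x : 4 <= n -> j < n -> z < n -> x < n ->
  [|| ((j.+1 == z) && (j + 5 <= n)),
      ((j == n - 4) && (z == n - 3)),
      ((j == n - 4) && (z == n - 1)),
      ((j == n - 1) && (z == n - 2)),
      ((j == n - 2) && (z == n - 1))
    | ((1 <= j) && (z == 0))] ->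
  D n j x <= (D n z x).+1.
Proof.
move=> n4 hj hz hx.
rewrite /D; repeat (case: ifP => /=); rewrite ?eqE /=; lia.
Qed.
End Dist.
Section Dist2.
Local Open Scope nat_scope.
Lemma D_nxt n j x : 4 <= n -> j < n -> x < n -> j != x ->
  [/\ nxt n j x < n,
  [|| ((j.+1 == nxt n j x) && (j + 5 <= n)),
      ((j == n - 4) && (nxt n j x == n - 3)),
      ((j == n - 4) && (nxt n j x == n - 1)),
      ((j == n - 1) && (nxt n j x == n - 2)),
      ((j == n - 2) && (nxt n j x == n - 1))
    | ((1 <= j) && (nxt n j x == 0))] &
  (D n (nxt n j x) x).+1 = D n j x].
Proof.
move=> n4 hj hx hjx.
split; rewrite /D /nxt; repeat (case: ifP => /=); rewrite ?eqE /=; lia.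
Qed.

Lemma D_lt n j x : 4 <= n -> j < n -> x < n -> D n j x < n.
Proof. move=> n4 hj hx; rewrite /D; repeat (case: ifP => /=); rewrite ?eqE /=; lia. Qed.

Lemma D_xx n x : 4 <= n -> x < n -> D n x x = 0.
Proof. move=> n4 hx; rewrite /D; repeat (case: ifP => /=); rewrite ?eqE /=; lia. Qed.
End Dist2.

Lemma walk_D n (j x : 'I_n) k : (4 <= n)%N -> walk (@Gp n) k j x -> (D n j x <= k)%N.
Proof.
move=> n4; elim: k j => [|k IH] j /=.
  by move=> /eqP ->; rewrite (@D_xx n x n4 (ltn_ord x)).
move=> /existsP [z /andP [e w]].
apply: (leq_trans (@D_edge n j z x n4 (ltn_ord j) (ltn_ord z) (ltn_ord x) e)).
by rewrite ltnS IH.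
Qed.

Lemma D_walk n (j x : 'I_n) : (4 <= n)%N -> walk (@Gp n) (D n j x) j x.
Proof.
move=> n4; move Ek: (D n j x) => k; elim: k j Ek => [|k IH] j Ek /=.
  apply/eqP; apply/val_inj => /=; apply/eqP; apply: contraT => hjx.
  by have [_ _] := @D_nxt n j x n4 (ltn_ord j) (ltn_ord x) hjx; rewrite Ek.
have hjx : j != x.
  by apply/eqP => hjx; move: Ek; rewrite hjx (@D_xx n x n4 (ltn_ord x)).
have [hlt e hD] := @D_nxt n j x n4 (ltn_ord j) (ltn_ord x) hjx.
apply/existsP; exists (Ordinal hlt); rewrite /Gp /= e /=.
by apply: IH => /=; apply/eqP; rewrite -eqSS hD Ek.
Qed.

Lemma dist_isE n (j x : 'I_n) k : (4 <= n)%N -> dist_is (@Gp n) j x k = (k == D n j x).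
Proof.
move=> n4; rewrite /dist_is; apply/idP/idP.
  move=> /andP [w /forallP h]; have le := @walk_D n _ _ _ n4 w.
  rewrite eqn_leq le andbT leqNgt; apply/negP => lt.
  by have := h (Ordinal lt); rewrite /= D_walk.
move=> /eqP ->; rewrite D_walk //=; apply/forallP => m.
by apply/negP => /(@walk_D n _ _ _ n4); rewrite leqNgt ltn_ord.
Qed.
Lemma lincentE (R : realType) n (a : nat -> R) (x : 'I_n) : (4 <= n)%N ->
  lincent (@Gp n) a x = \sum_(j < n) a (D n j x).
Proof.
move=> n4; rewrite /lincent.
rewrite [RHS](partition_big (fun j : 'I_n => Ordinal (@D_lt n j x n4 (ltn_ord j) (ltn_ord x))) predT) //=.
apply: eq_bigr => k _.
rewrite /dcount.
under eq_bigr => j /eqP Ej.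
  rewrite (_ : D n j x = k); last by rewrite -Ej.
  over.
rewrite sumr_const mulr_natl; congr (_ *+ _).
apply: eq_card => j; by rewrite inE dist_isE // -val_eqE /=.
Qed.
Definition sumA (R : realType) (a : nat -> R) N := \sum_(0 <= l < N) a l.

Lemma revS (R : realType) (a : nat -> R) N :
  \sum_(0 <= j < N) a (N - j)%N = sumA a N.+1 - a 0%N.
Proof.
rewrite /sumA big_nat_recl // addrC addKr big_nat_rev /=.
by apply: eq_big_nat => j /andP [_ hj]; congr (a _); rewrite add0n; lia.
Qed.

Lemma tail3 (R : realType) (F : nat -> R) n : (3 <= n)%N ->
  \sum_(0 <= j < n) F j = \sum_(0 <= j < n - 3) F j + F (n-3)%N + F (n-2)%N + F (n-1)%N.
Proof.
move=> n3; rewrite (@big_cat_nat _ _ _ (n-3) 0 n _ _ (leq0n _) (leq_subr 3 n)).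
rewrite (@big_ltn _ _ _ (n-3) n); last by lia.
rewrite (@big_ltn _ _ _ (n-3).+1 n); last by lia.
rewrite (@big_ltn _ _ _ (n-3).+2 n); last by lia.
rewrite (@big_geq _ _ _ (n-3).+3 n); last by lia.
simpl.
rewrite addr0 !addrA; congr (_ + _ + _ + _); congr F; lia.
Qed.

Lemma sum_low (R : realType) (a : nat -> R) n x : (4 <= n)%N -> (x <= n - 4)%N ->
  \sum_(j < n) a (D n j x) = sumA a x.+1 + (n - 1 - x)%:R * a x.+1.
Proof.
move=> n4 hx; rewrite -(big_mkord xpredT (fun j => a (D n j x))).
rewrite (@big_cat_nat _ _ _ x.+1 0 n _ _ (leq0n _)) /=; last by lia.
have -> : \sum_(0 <= i < x.+1) a (D n i x) = sumA a x.+1.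
  rewrite /sumA big_nat_rev /=.
  by apply: eq_big_nat => j /andP [_ hj]; congr (a _); rewrite /D; repeat (case: ifP); lia.
congr (_ + _).
have -> : \sum_(x.+1 <= i < n) a (D n i x) = \sum_(x.+1 <= i < n) a x.+1.
  by apply: eq_big_nat => j /andP [h1 hj]; congr (a _); rewrite /D; repeat (case: ifP); lia.
by rewrite sumr_const_nat mulr_natl; congr (_ *+ _); lia.
Qed.

Lemma sum_na (R : realType) (a : nat -> R) n : (4 <= n)%N ->
  \sum_(j < n) a (D n j (n-3)) = sumA a (n-2) + a (n-2)%N + a (n-2)%N.
Proof.
move=> n4; rewrite -(big_mkord xpredT (fun j => a (D n j (n-3)))) tail3 //; last by lia.
have -> : \sum_(0 <= i < n - 3) a (D n i (n-3)) = \sum_(0 <= i < n-3) a (n - 3 - i)%N.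
  by apply: eq_big_nat => j /andP [_ hj]; congr (a _); rewrite /D; repeat (case: ifP); lia.
rewrite revS.
have -> : D n (n-3) (n-3) = 0%N by rewrite /D; repeat (case: ifP); lia.
have -> : D n (n-2) (n-3) = (n-2)%N by rewrite /D; repeat (case: ifP); lia.
have -> : D n (n-1) (n-3) = (n-2)%N by rewrite /D; repeat (case: ifP); lia.
have -> : (n - 3).+1 = (n-2)%N by lia.
by rewrite subrK.
Qed.

Lemma sum_nb (R : realType) (a : nat -> R) n : (4 <= n)%N ->
  \sum_(j < n) a (D n j (n-2)) = sumA a (n-1) + a (n-1)%N.
Proof.
move=> n4; rewrite -(big_mkord xpredT (fun j => a (D n j (n-2)))) tail3 //; last by lia.
have -> : \sum_(0 <= i < n - 3) a (D n i (n-2)) = \sum_(0 <= i < n-3) a (n - 3 - i).+1%N.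
  by apply: eq_big_nat => j /andP [_ hj]; congr (a _); rewrite /D; repeat (case: ifP); lia.
rewrite (revS (fun k => a k.+1)).
have -> : D n (n-3) (n-2) = (n-1)%N by rewrite /D; repeat (case: ifP); lia.
have -> : D n (n-2) (n-2) = 0%N by rewrite /D; repeat (case: ifP); lia.
have -> : D n (n-1) (n-2) = 1%N by rewrite /D; repeat (case: ifP); lia.
have -> : (n - 1 = (n - 3).+2)%N by lia.
have -> : sumA a (n-3).+2 = a 0%N + sumA (fun k => a k.+1) (n-3).+1 by rewrite /sumA big_nat_recl.
lra.
Qed.

Lemma sum_nc (R : realType) (a : nat -> R) n : (4 <= n)%N ->
  \sum_(j < n) a (D n j (n-1)) = sumA a (n-2) + a (n-2)%N + a 1%N.
Proof.
move=> n4; rewrite -(big_mkord xpredT (fun j => a (D n j (n-1)))) tail3 //; last by lia.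
have -> : \sum_(0 <= i < n - 3) a (D n i (n-1)) = \sum_(0 <= i < n-3) a (n - 3 - i)%N.
  by apply: eq_big_nat => j /andP [_ hj]; congr (a _); rewrite /D; repeat (case: ifP); lia.
rewrite revS.
have -> : D n (n-3) (n-1) = (n-2)%N by rewrite /D; repeat (case: ifP); lia.
have -> : D n (n-2) (n-1) = 1%N by rewrite /D; repeat (case: ifP); lia.
have -> : D n (n-1) (n-1) = 0%N by rewrite /D; repeat (case: ifP); lia.
have -> : (n - 3).+1 = (n-2)%N by lia.
lra.
Qed.
Section Cons.
Variables (R : realType) (n : nat) (V : nat -> R).
Hypothesis n4 : (4 <= n)%N.

Definition cc (k : nat) : R := (n - 1 - k)%:R.
Definition ww (k : nat) : R := 1 / (cc k * (cc k - 1)).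
Definition UU (k : nat) : R := \sum_(i < k) V i * ww i.
Definition Sp (k : nat) : R := cc k * UU k.
Definition acons (k : nat) : R :=
  if k == 0%N then 0
  else if (k <= n - 3)%N then Sp k - Sp k.-1
  else if k == (n - 2)%N then (V (n - 3)%N - Sp (n - 3)) / 2
  else V (n - 2)%N - Sp (n - 3) - (V (n - 3)%N - Sp (n - 3)) / 2.
Definition LL : R := V (n-3)%N / 2 + UU (n - 3) + V 0%N / (n - 1)%:R.

Lemma sumA_cons k : (k <= n - 3)%N -> sumA acons k.+1 = Sp k.
Proof.
elim: k => [|k IH] hk.
  by rewrite /sumA big_nat1 /acons eqxx /Sp /UU big_ord0 mulr0.
rewrite /sumA big_nat_recr //= -/(sumA acons k.+1) IH; last by lia.
rewrite /acons /=; have -> : (k.+1 <= n - 3)%N by lia.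
by rewrite addrC subrK.
Qed.

Lemma cc_pos k : (k <= n - 4)%N -> cc k = cc k.+1 + 1 /\ cc k.+1 = cc k - 1 /\ cc k != 0 /\ cc k - 1 != 0.
Proof.
move=> hk; rewrite /cc.
have -> : (n - 1 - k = (n - 1 - k.+1) + 1)%N by lia.
rewrite natrD addrK; split => //; split => //.
have hp : (0 < n - 1 - k.+1)%N by lia.
split; last by rewrite pnatr_eq0 -lt0n.
by rewrite natr1 pnatr_eq0.
Qed.

Lemma f_low x : (x <= n - 4)%N ->
  sumA acons x.+1 + (n - 1 - x)%:R * acons x.+1 = V x.
Proof.
move=> hx; rewrite sumA_cons; last by lia.
rewrite /acons /=; have -> : (x.+1 <= n - 3)%N by lia.
rewrite -/(cc x) /Sp /UU big_ord_recr /=.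
have [_ [-> [h1 h2]]] := cc_pos hx.
rewrite /ww; field.
by rewrite h1 h2.
Qed.
End Cons.
Section Cons2.
Variables (R : realType) (n : nat) (V : nat -> R).
Hypothesis n4 : (4 <= n)%N.
Local Notation a := (acons n V).

Lemma a_n2 : a (n-2)%N = (V (n - 3)%N - Sp n V (n - 3)) / 2.
Proof.
rewrite /acons; have -> : ((n-2)%N == 0%N) = false by apply/eqP; lia.
have -> : (n - 2 <= n - 3)%N = false by apply/negbTE; lia.
by rewrite eqxx.
Qed.

Lemma a_n1 : a (n-1)%N = V (n - 2)%N - Sp n V (n - 3) - (V (n - 3)%N - Sp n V (n - 3)) / 2.
Proof.
rewrite /acons; have -> : ((n-1)%N == 0%N) = false by apply/eqP; lia.
have -> : (n - 1 <= n - 3)%N = false by apply/negbTE; lia.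
by have -> : ((n-1)%N == (n - 2)%N) = false by apply/eqP; lia.
Qed.

Lemma f_na : sumA a (n-2) + a (n-2)%N + a (n-2)%N = V (n-3)%N.
Proof.
have -> : (n - 2 = (n-3).+1)%N by lia.
rewrite sumA_cons //; have <- : (n - 2 = (n-3).+1)%N by lia.
by rewrite a_n2; field.
Qed.

Lemma f_nb : sumA a (n-1) + a (n-1)%N = V (n-2)%N.
Proof.
have -> : (n - 1 = (n-2).+1)%N by lia.
rewrite /sumA big_nat_recr //= -/(sumA a (n-2)).
have -> : (n - 2 = (n-3).+1)%N by lia.
rewrite sumA_cons //; have <- : (n - 2 = (n-3).+1)%N by lia.
have <- : (n - 1 = (n-2).+1)%N by lia.
by rewrite a_n2 a_n1; field.
Qed.

Lemma f_nc : sumA a (n-2) + a (n-2)%N + a 1%N = LL n V.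
Proof.
have -> : (n - 2 = (n-3).+1)%N by lia.
rewrite sumA_cons //; have <- : (n - 2 = (n-3).+1)%N by lia.
rewrite a_n2 /acons /=; have -> : (1 <= n - 3)%N by lia.
rewrite /LL /Sp /UU big_ord1 big_ord0 mulr0 subr0.
have -> : cc R n (n - 3) = 2 by rewrite /cc; congr (_%:R); lia.
have -> : cc R n 1 = (n-2)%:R by rewrite /cc; congr (_%:R); lia.
rewrite /ww /cc subn0.
have e1 : (n - 1)%:R = (n - 2)%:R + 1 :> R by rewrite natr1; congr (_%:R); lia.
have h1 : (n - 2)%:R != 0 :> R by rewrite pnatr_eq0; apply/eqP; lia.
have h2 : (n - 1)%:R != 0 :> R by rewrite pnatr_eq0; apply/eqP; lia.
rewrite e1 addrK; rewrite e1 in h2; field.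
by rewrite h1 h2.
Qed.

Lemma lincent_cons (x : 'I_n) :
  lincent (@Gp n) a x = if nat_of_ord x == (n-1)%N then LL n V else V x.
Proof.
rewrite lincentE //.
have hx := ltn_ord x.
case: (leqP (nat_of_ord x) (n-4)) => h.
  rewrite sum_low // f_low //; have -> : (nat_of_ord x == n - 1)%N = false by apply/eqP; lia.
  by [].
have : (nat_of_ord x == n-3 \/ nat_of_ord x == n-2 \/ nat_of_ord x == n-1)%N by lia.
case=> [/eqP e|[/eqP e|/eqP e]].
- rewrite e sum_na // f_na //; have -> : ((n - 3)%N == (n - 1)%N) = false by apply/eqP; lia.
  by [].
- rewrite e sum_nb // f_nb //; have -> : ((n - 2)%N == (n - 1)%N) = false by apply/eqP; lia.
  by [].
- by rewrite e sum_nc // f_nc // eqxx.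
Qed.
End Cons2.
Section Bounds.
Variables (R : realType) (n : nat).
Hypothesis n4 : (4 <= n)%N.

Lemma sum_ww_k k : (k <= n - 3)%N ->
  \sum_(i < k) ww R n i = 1 / cc R n k - 1 / cc R n 0.
Proof.
elim: k => [|k IH] hk; first by rewrite big_ord0 subrr.
rewrite big_ord_recr /= IH; last by lia.
have [e1 [e2 [h1 h2]]] := @cc_pos R n n4 k ltac:(lia).
rewrite /ww e2; field.
move: h1 h2; rewrite /cc => -> ->; rewrite subn0 pnatr_eq0 andbT; apply/eqP; lia.
Qed.

Lemma sum_ww : \sum_(i < n - 3) ww R n i = 1 / 2 - 1 / (n - 1)%:R.
Proof.
rewrite sum_ww_k //.
have -> : cc R n (n - 3) = 2 by rewrite /cc; congr (_%:R); lia.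
by rewrite /cc subn0.
Qed.

Lemma ww_bounds i : (i < n - 3)%N -> 0 <= ww R n i /\ 1 / (n%:R ^+ 2) <= ww R n i.
Proof.
move=> hi.
have [e1 [e2 [h1 h2]]] := @cc_pos R n n4 i ltac:(lia).
have c1 : 1 <= cc R n i - 1.
  by rewrite -e2 /cc ler1n; lia.
have c2 : cc R n i <= n%:R by rewrite /cc ler_nat; lia.
have p : 0 < cc R n i * (cc R n i - 1) by apply: mulr_gt0; lra.
rewrite /ww; split; first by rewrite divr_ge0 // ltW.
have n0 : 0 < n%:R ^+ 2 :> R by rewrite exprn_gt0 // ltr0n; lia.
rewrite !div1r lef_pV2 ?posrE //.
rewrite expr2 ler_pM //; lra.
Qed.

Lemma LL_shift (V : nat -> R) c :
  LL n (fun k => V k - c) = LL n V - c /\ LL n (fun k => c - V k) = c - LL n V.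
Proof.
have hn : (n - 1)%:R != 0 :> R by rewrite pnatr_eq0; apply/eqP; lia.
have s1 : UU n (fun k => V k - c) (n - 3) = UU n V (n - 3) - c * (1 / 2 - 1 / (n - 1)%:R).
  by rewrite /UU -sum_ww mulr_sumr -sumrB; apply: eq_bigr => i _; ring.
have s2 : UU n (fun k => c - V k) (n - 3) = c * (1 / 2 - 1 / (n - 1)%:R) - UU n V (n - 3).
  by rewrite /UU -sum_ww mulr_sumr -sumrB; apply: eq_bigr => i _; ring.
rewrite /LL s1 s2; split; field; done.
Qed.

Lemma LL_pos (W : nat -> R) x : (forall k, (k <= n - 3)%N -> 0 <= W k) -> (x <= n - 3)%N ->
  W x / (n%:R ^+ 2) <= LL n W.
Proof.
move=> hW hx.
have n0 : 0 < n%:R :> R by rewrite ltr0n; lia.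
have n1 : 0 < (n - 1)%:R :> R by rewrite ltr0n; lia.
have hU : 0 <= UU n W (n - 3).
  rewrite /UU sumr_ge0 // => i _; apply: mulr_ge0; first by apply: hW; have := ltn_ord i; lia.
  by have [] := @ww_bounds i (ltn_ord i).
have h0 : 0 <= W 0%N / (n - 1)%:R by rewrite divr_ge0 ?hW ?ltW //; lia.
have h3 : 0 <= W (n-3)%N by apply: hW.
have Wx := hW x hx.
have nsq : 1 <= n%:R ^+ 2 :> R.
  by rewrite expr2 -natrM ler1n; nia.
case: (ltnP x (n-3)) => hx3.
  have [_ wb] := @ww_bounds x hx3.
  have : W x * ww R n x <= UU n W (n - 3).
    rewrite /UU (bigD1 (Ordinal hx3)) //= lerDl sumr_ge0 // => i _.
    apply: mulr_ge0; first by apply: hW; have := ltn_ord i; lia.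
    by have [] := @ww_bounds i (ltn_ord i).
  have : W x / n%:R ^+ 2 <= W x * ww R n x.
    by have := ler_wpM2l Wx wb; rewrite div1r.
  rewrite /LL; lra.
have -> : x = (n - 3)%N by lia.
rewrite /LL.
have : W (n-3)%N / n%:R ^+ 2 <= W (n-3)%N / 2.
  apply: ler_wpM2l => //; rewrite lef_pV2 ?posrE; try lra.
  by rewrite expr2 -natrM ler_nat; nia.
lra.
Qed.
End Bounds.
Section Rep.
Variables (R : realType) (n : nat) (c : 'I_n) (pi : 'S_n).
Hypothesis n4 : (4 <= n)%N.
Hypothesis hc : nat_of_ord c = (n - 1)%N.
Let r : nat := nat_of_ord ((pi^-1)%g c).
Hypothesis hr : (2 <= r <= n - 3)%N.
Let K : R := n%:R ^+ 3.
Let p (x : 'I_n) : nat := nat_of_ord ((pi^-1)%g x).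
Let G (k : nat) : R := if (k < r)%N then K - k%:R else - k%:R.
Let Vn (k : nat) : R := G (p (insubd c k)).

Lemma Vn_pi (i : 'I_n) : Vn (pi i) = G i.
Proof. by rewrite /Vn valKd /p permK. Qed.

Lemma pi_c (i : 'I_n) : (nat_of_ord (pi i) == (n - 1)%N) = (nat_of_ord i == r).
Proof.
rewrite -hc.
have -> : (nat_of_ord (pi i) == nat_of_ord c) = (pi i == c) by [].
rewrite -(inj_eq (@perm_inj _ (pi^-1)%g)) permK.
by [].
Qed.

Lemma Kn : n%:R <= K.
Proof.
rewrite /K -natrX ler_nat; have : (1 <= n)%N by lia.
by move=> h; rewrite -{1}(expn1 n) leq_pexp2l //; lia.
Qed.

Lemma Vn_lo k : (-(n%:R)) <= Vn k.
Proof.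
rewrite /Vn /G; set x := insubd c k; have := ltn_ord ((pi^-1)%g x); rewrite -/(p x) => h.
have hK := Kn.
have : (p x)%:R <= n%:R :> R by rewrite ler_nat; lia.
have : 0 <= (p x)%:R :> R by rewrite ler0n.
case: ifP => _; lra.
Qed.

Lemma Vn_hi k : Vn k <= K.
Proof.
rewrite /Vn /G; set x := insubd c k.
have hK := Kn.
have : 0 <= (p x)%:R :> R by rewrite ler0n.
have : 0 <= n%:R :> R by rewrite ler0n.
case: ifP => _; lra.
Qed.

Lemma LL_ge0 : 0 <= LL n Vn.
Proof.
have h0 : (0 < n)%N by lia.
have h1 : (1 < n)%N by lia.
pose i0 : 'I_n := Ordinal h0. pose i1 : 'I_n := Ordinal h1.
pose x0 := if nat_of_ord (pi i0) == (n - 2)%N then pi i1 else pi i0.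
have hx0 : (nat_of_ord x0 <= n - 3)%N.
  have a0 := pi_c i0; have a1 := pi_c i1.
  have := ltn_ord (pi i0); have := ltn_ord (pi i1).
  have : pi i0 != pi i1 by rewrite (inj_eq perm_inj).
  rewrite -val_eqE /x0 /=; move: a0 a1 => /= a0 a1.
  case: ifP => e; move: a0 a1; rewrite /=; try lia.
have Gx : K - 1 <= Vn x0.
  rewrite /x0; case: ifP => _; rewrite Vn_pi /G /i0 /i1 /=.
    by (have -> : (1 < r)%N by lia); lra.
  by (have -> : (0 < r)%N by lia); lra.
have hn : (n%:R : R) ^+ 2 != 0 by rewrite expf_neq0 // pnatr_eq0; lia.
have H : (Vn x0 - - n%:R) / n%:R ^+ 2 <= LL n Vn - - n%:R.
  case: (LL_shift n4 Vn (- n%:R)) => <- _.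
  apply: (@LL_pos R n n4 (fun k => Vn k - (- n%:R))) => // k _.
  by have := Vn_lo k; lra.
have : (K - 1 + n%:R) / n%:R ^+ 2 <= LL n Vn - - n%:R.
  apply: (le_trans _ H); apply: ler_wpM2r; first by rewrite invr_ge0 exprn_ge0 // ler0n.
  by rewrite opprK lerD2r.
have e : K / n%:R ^+ 2 = n%:R.
  by rewrite /K exprS -mulrA divff // mulr1.
have : K / n%:R ^+ 2 <= (K - 1 + n%:R) / n%:R ^+ 2.
  apply: ler_wpM2r; first by rewrite invr_ge0 exprn_ge0 // ler0n.
  have : 1 <= n%:R :> R by rewrite ler1n; lia.
  lra.
lra.
Qed.
Lemma LL_leK : LL n Vn <= K - n%:R.
Proof.
have h0 : (n - 2 < n)%N by lia.
have h1 : (n - 1 < n)%N by lia.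
pose i0 : 'I_n := Ordinal h0. pose i1 : 'I_n := Ordinal h1.
pose x0 := if nat_of_ord (pi i0) == (n - 2)%N then pi i1 else pi i0.
have hx0 : (nat_of_ord x0 <= n - 3)%N.
  have a0 := pi_c i0; have a1 := pi_c i1.
  have := ltn_ord (pi i0); have := ltn_ord (pi i1).
  have : pi i0 != pi i1 by rewrite (inj_eq perm_inj) -val_eqE /=; apply/eqP; lia.
  rewrite -val_eqE /x0 /=; move: a0 a1 => /= a0 a1.
  case: ifP => e; move: a0 a1; rewrite /=; try lia.
have Gx : Vn x0 <= 0.
  rewrite /x0; case: ifP => _; rewrite Vn_pi /G /i0 /i1 /=.
    by (have -> : (n - 1 < r)%N = false by apply/negbTE; lia); rewrite oppr_le0 ler0n.
  by (have -> : (n - 2 < r)%N = false by apply/negbTE; lia); rewrite oppr_le0 ler0n.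
have hn : (n%:R : R) ^+ 2 != 0 by rewrite expf_neq0 // pnatr_eq0; lia.
have H : (K - Vn x0) / n%:R ^+ 2 <= K - LL n Vn.
  case: (LL_shift n4 Vn K) => _ <-.
  apply: (@LL_pos R n n4 (fun k => K - Vn k)) => // k _.
  by have := Vn_hi k; lra.
have e : K / n%:R ^+ 2 = n%:R.
  by rewrite /K exprS -mulrA divff // mulr1.
have : K / n%:R ^+ 2 <= (K - Vn x0) / n%:R ^+ 2.
  apply: ler_wpM2r; first by rewrite invr_ge0 exprn_ge0 // ler0n.
  lra.
lra.
Qed.

Lemma rep_main : representable R (@Gp n) pi.
Proof.
exists (acons n Vn) => i j hij.
rewrite !lincent_cons // !pi_c !Vn_pi.
have hK := Kn; have l0 := LL_ge0; have l1 := LL_leK.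
have hi := ltn_ord i; have hj := ltn_ord j.
have ri : (i%:R < j%:R :> R) by rewrite ltr_nat.
have jn : (j%:R < n%:R :> R) by rewrite ltr_nat.
have i0 : (0 <= i%:R :> R) by rewrite ler0n.
rewrite /G.
case: eqP => ej; case: eqP => ei; try lia.
- have -> : (nat_of_ord i < r)%N by lia.
  lra.
- have -> : (nat_of_ord j < r)%N = false by apply/negbTE; lia.
  lra.
- case: ifP => a; case: ifP => b; try lia; lra.
Qed.
End Rep.
Local Close Scope classical_set_scope.
Section Count.
Variables (n : nat) (c : 'I_n).
Definition cls (r : 'I_n) := [set s : 'S_n | (s^-1)%g c == r].

Lemma cls_le (r r' : 'I_n) : (#|cls r| <= #|cls r'|)%N.
Proof.
have sub : [set (tperm r r' * s)%g | s in cls r] \subset cls r'.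
  apply/fintype.subsetP => t /imsetP [s]; rewrite !inE => /eqP hs ->.
  by rewrite invMg permM tpermV hs tpermL.
have := subset_leq_card sub.
by rewrite (card_imset _ (mulgI (tperm r r'))).
Qed.

Lemma cls_eq (r r' : 'I_n) : #|cls r| = #|cls r'|.
Proof. by apply/eqP; rewrite eqn_leq !cls_le. Qed.

Lemma cls_sum : (\sum_(r : 'I_n) #|cls r|)%N = n`!.
Proof.
rewrite -card_Sn -sum1_card.
rewrite (partition_big (fun s : 'S_n => (s^-1)%g c) predT) //=.
apply: eq_bigr => r _; rewrite -sum1_card; apply: eq_bigl => s.
by rewrite inE.
Qed.

Lemma cls_card (r : 'I_n) : (n * #|cls r|)%N = n`!.
Proof.
rewrite -cls_sum (eq_bigr (fun _ => #|cls r|)); last by move=> r' _; apply: cls_eq.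
by rewrite sum_nat_const card_ord.
Qed.

Definition good := [set s : 'S_n | (2 <= nat_of_ord ((s^-1)%g c) <= n - 3)%N].

Lemma bad_card : (4 <= n)%N -> (n * #|~: good| <= 4 * n`!)%N.
Proof.
move=> n4.
have h0 : (0 < n)%N by lia. have h1 : (1 < n)%N by lia.
have h2 : (n - 2 < n)%N by lia. have h3 : (n - 1 < n)%N by lia.
have sub : ~: good \subset (cls (Ordinal h0) :|: cls (Ordinal h1)) :|: (cls (Ordinal h2) :|: cls (Ordinal h3)).
  apply/fintype.subsetP => s; rewrite !inE -!val_eqE /=.
  by have := ltn_ord ((s^-1)%g c); lia.
have := subset_leq_card sub.
move=> /(leq_trans)/(_ (leq_card_setU _ _)) H.
have H' : (#|~: good| <= #|cls (Ordinal h0)| + #|cls (Ordinal h1)| + (#|cls (Ordinal h2)| + #|cls (Ordinal h3)|))%N.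
  apply: (leq_trans H); apply: leq_add; exact: leq_card_setU.
rewrite -!(cls_card (Ordinal h0)) in H' *.
rewrite !(cls_eq _ (Ordinal h0)) in H'.
have := leq_mul (leqnn n) H'.
move=> /leq_trans; apply.
lia.
Qed.
End Count.
Local Close Scope classical_set_scope.
Lemma Rratio_bounds (R : realType) n : (5 <= n)%N ->
  1 - 8 * harmonic n <= Rratio R (@Gp n) <= 1.
Proof.
move=> n5; have n4 : (4 <= n)%N by lia.
have hn1 : (n - 1 < n)%N by lia.
pose c : 'I_n := Ordinal hn1.
have hc : nat_of_ord c = (n - 1)%N by [].
set A := [set pi : 'S_n | `[< representable R (@Gp n) pi >]].
have sub : good c \subset A.
  apply/fintype.subsetP => s; rewrite !inE => hs.
  exact: (@rep_main R n c s n4 hc hs).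
have h1 := subset_leq_card sub.
have h2 := bad_card c n4.
have h3 := cardsC (good c); rewrite card_Sn in h3.
have h4 : (#|A| <= n`!)%N by rewrite -card_Sn max_card.
have key : (n * n`! <= n * #|A| + 4 * n`!)%N by nia.
have fpos : (0 < n`!)%N by apply: fact_gt0.
rewrite /Rratio -/A.
have yp : 0 < (n`!)%:R :> R by rewrite ltr0n.
apply/andP; split; last first.
  by rewrite ler_pdivrMr // mul1r ler_nat.
have key' : n%:R * (n`!)%:R <= n%:R * #|A|%:R + 4 * (n`!)%:R :> R.
  by rewrite -!natrM -natrD ler_nat.
have m5 : 5 <= n%:R :> R by rewrite ler_nat.
have x0 : 0 <= #|A|%:R :> R by rewrite ler0n.
move: key' m5 x0 yp; set m := n%:R; set x := #|A|%:R; set y := (n`!)%:R => key' m5 x0 yp.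
have kk : (m - 7) * y <= (m + 1) * x by nra.
rewrite /harmonic /= -/m.
have mp : 0 < m + 1 by lra.
rewrite ler_pdivlMr // -(ler_pM2l mp) mulrA.
rewrite (_ : (n.+1)%:R = m + 1); last by rewrite /m natr1.
have e : (m + 1) * (1 - 8 / (m + 1)) = m - 7.
  by field; rewrite gt_eqF.
by rewrite e.
Qed.
Local Open Scope classical_set_scope.
Theorem corollary6 (R : realType) :
  (fun n : nat => Rratio R (@Gp n)) @ \oo --> (1 : R).
Proof.
have hf : (fun n : nat => 1 - 8 * harmonic n) @ \oo --> (1 - 8 * 0 : R).
  apply: cvgB; first exact: cvg_cst.
  apply: cvgMl_tmp; exact: cvg_harmonic.
rewrite mulr0 subr0 in hf.
apply: (@squeeze_cvgr _ _ _ _ (fun n : nat => 1 - 8 * harmonic n) (fun _ => 1) (fun n : nat => Rratio R (@Gp n))) => //; last exact: cvg_cst.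
apply: filterS (nbhs_infty_ge 5) => n hn.
exact: Rratio_bounds.
Qed.
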